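(* Let $\{|a_i\rangle\}$ and $\{|b_j\rangle\}$ be orthonormal bases of finite-dimensional systems $A$ and $B$, $n=\min\{\dim A,\dim B\}$, and let $\tau_{AB}=\sum_{i,j=1}^n\tau_{ij}|a_i\rangle\langle a_j|\otimes|b_i\rangle\langle b_j|$ be a state (a maximally correlated state). Let $\sigma_{AB}=\sum_{i=1}^n\tau_{ii}|a_i\rangle\langle a_i|\otimes|b_i\rangle\langle b_i|$. Then, with all $l_1$-norms computed in the basis $\{|a_i\rangle\otimes|b_j\rangle\}$, $$\|\tau_{AB}-\sigma_{AB}\|_{l_1}=\min_{\xi\in\mathcal{PPT}}\|\tau_{AB}-\xi\|_{l_1}=\min_{\xi\in\mathcal{SEP}}\|\tau_{AB}-\xi\|_{l_1}.$$
   Context: For a matrix $X$ and an orthonormal basis $\{|e_k\rangle\}$, $\|X\|_{l_1}=\sum_{k,l}|\langle e_k|X|e_l\rangle|$ (basis-dependent). $\mathcal{SEP}$ is the set of separable states on $A\otimes B$, i.e. convex combinations of product states $\tau_A\otimes\sigma_B$; $\mathcal{PPT}$ is the set of states on $A\otimes B$ whose partial transpose is positive semidefinite. *)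

(* Defs.v *)
(* Complex scalars: an arbitrary numClosedFieldType C
   (e.g. R[i] for a real closed field R, or algC). *)
From mathcomp Require Import all_boot all_order all_algebra.
From mathcomp Require Export mxtens.
Set Implicit Arguments. Unset Strict Implicit. Unset Printing Implicit Defensive.
Import Order.TTheory GRing.Theory Num.Theory.
Local Open Scope ring_scope.

Section QDefs.
Context {C : numClosedFieldType}.

Definition adjmx m n (M : 'M[C]_(m, n)) : 'M[C]_(n, m) := map_mx Num.conj (M^T).

Definition psdmx n (A : 'M[C]_n) : Prop :=
  forall v : 'cV[C]_n, 0 <= (adjmx v *m A *m v) 0 0.

Definition density n (A : 'M[C]_n) : Prop := psdmx A /\ \tr A = 1.

Definition unitary n (U : 'M[C]_n) : Prop := U *m adjmx U = 1%:M.

Definition ketbra n (u v : 'cV[C]_n) : 'M[C]_n := u *m adjmx v.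

(* l1-norm in the orthonormal basis formed by the columns e_k of U:
   sum_{k,l} |<e_k| X |e_l>| *)
Definition l1norm_in n (U X : 'M[C]_n) : C :=
  \sum_(k < n) \sum_(l < n) `|(adjmx U *m X *m U) k l|.

(* partial transpose on B, w.r.t. the standard basis (index (i,k) of A⊗B is
   mxtens_index (i,k)):  <i k| X^Γ |j l> = <i l| X |j k> *)
Definition ptransB dA dB (X : 'M[C]_(dA * dB)) : 'M[C]_(dA * dB) :=
  \matrix_(p, q) X (mxtens_index ((mxtens_unindex p).1, (mxtens_unindex q).2))
                   (mxtens_index ((mxtens_unindex q).1, (mxtens_unindex p).2)).

Definition PPT dA dB (X : 'M[C]_(dA * dB)) : Prop :=
  density X /\ psdmx (ptransB X).

Definition SEP dA dB (X : 'M[C]_(dA * dB)) : Prop :=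
  exists (K : nat) (p : 'I_K -> C) (rA : 'I_K -> 'M[C]_dA) (rB : 'I_K -> 'M[C]_dB),
    [/\ forall k, 0 <= p k, \sum_(k < K) p k = 1,
        forall k, density (rA k), forall k, density (rB k) &
        X = \sum_(k < K) p k *: (rA k *t rB k)].

Definition idxA dA dB (i : 'I_(minn dA dB)) : 'I_dA := widen_ord (geq_minl dA dB) i.
Definition idxB dA dB (i : 'I_(minn dA dB)) : 'I_dB := widen_ord (geq_minr dA dB) i.

(* maximally correlated operator
   sum_{i,j<n} t_ij |a_i><a_j| ⊗ |b_i><b_j|, with a_i = col i UA, b_j = col j UB *)
Definition maxcorr dA dB (UA : 'M[C]_dA) (UB : 'M[C]_dB)
    (t : 'M[C]_(minn dA dB)) : 'M[C]_(dA * dB) :=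
  \sum_(i < minn dA dB) \sum_(j < minn dA dB)
     t i j *: (ketbra (col (idxA i) UA) (col (idxA j) UA)
               *t ketbra (col (idxB i) UB) (col (idxB j) UB)).

Definition maxcorr_diag dA dB (UA : 'M[C]_dA) (UB : 'M[C]_dB)
    (t : 'M[C]_(minn dA dB)) : 'M[C]_(dA * dB) :=
  \sum_(i < minn dA dB)
     t i i *: (ketbra (col (idxA i) UA) (col (idxA i) UA)
               *t ketbra (col (idxB i) UB) (col (idxB i) UB)).
End QDefs.

(* Main.v *)
Require Import Defs.
From mathcomp Require Import all_boot all_order all_algebra.
From mathcomp Require Import mxtens.
Import Order.TTheory GRing.Theory Num.Theory.
Local Open Scope ring_scope.
Set Implicit Arguments. Unset Strict Implicit.

Section Aux.
Variable C : numClosedFieldType.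

Definition form n (X : 'M[C]_n) (v w : 'cV[C]_n) : C := (adjmx v *m X *m w) 0 0.

Lemma adjmxE m n (M : 'M[C]_(m,n)) i j : adjmx M i j = (M j i)^*.
Proof. by rewrite /adjmx !mxE. Qed.

Lemma adjmxK m n (M : 'M[C]_(m,n)) : adjmx (adjmx M) = M.
Proof. by apply/matrixP=> i j; rewrite !adjmxE conjCK. Qed.

Lemma adjmxM m n p (A : 'M[C]_(m,n)) (B : 'M[C]_(n,p)) :
  adjmx (A *m B) = adjmx B *m adjmx A.
Proof.
apply/matrixP=> i j; rewrite adjmxE !mxE rmorph_sum; apply: eq_bigr=> k _.
by rewrite !adjmxE rmorphM mulrC.
Qed.

Lemma adjmxD m n (A B : 'M[C]_(m,n)) : adjmx (A + B) = adjmx A + adjmx B.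
Proof. by apply/matrixP=> i j; rewrite !adjmxE !mxE rmorphD. Qed.

Lemma adjmxZ m n a (A : 'M[C]_(m,n)) : adjmx (a *: A) = a^* *: adjmx A.
Proof. by apply/matrixP=> i j; rewrite !adjmxE !mxE rmorphM. Qed.

Lemma adjmxT m n p q (A : 'M[C]_(m,n)) (B : 'M[C]_(p,q)) :
  adjmx (A *t B) = adjmx A *t adjmx B.
Proof. by apply/matrixP=> i j; rewrite !adjmxE !mxE rmorphM. Qed.

Lemma adjmx_delta m n (i : 'I_m) (j : 'I_n) : adjmx (delta_mx i j : 'M[C]_(m,n)) = delta_mx j i.
Proof. by apply/matrixP=> k l; rewrite adjmxE !mxE andbC; case: (_ && _); rewrite ?conjC1 ?conjC0. Qed.

Lemma unitaryV n (U : 'M[C]_n) : unitary U -> adjmx U *m U = 1%:M.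
Proof. by move=> /mulmx1C. Qed.

Lemma rot_entry N (W X : 'M[C]_N) p q :
  (adjmx W *m X *m W) p q = form X (col p W) (col q W).
Proof.
rewrite /form !mxE; apply: eq_bigr=> s _; rewrite !mxE; congr (_ * _).
by apply: eq_bigr=> r _; rewrite !mxE.
Qed.

Lemma formZl N (X : 'M[C]_N) a v w : form X (a *: v) w = a^* * form X v w.
Proof. by rewrite /form adjmxZ -!scalemxAl mxE. Qed.
Lemma formZr N (X : 'M[C]_N) a v w : form X v (a *: w) = a * form X v w.
Proof. by rewrite /form -!scalemxAr mxE. Qed.
Lemma formDl N (X : 'M[C]_N) u v w : form X (u + v) w = form X u w + form X v w.
Proof. by rewrite /form adjmxD !mulmxDl mxE. Qed.
Lemma formDr N (X : 'M[C]_N) u v w : form X u (v + w) = form X u w + form X u v.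
Proof. by rewrite /form mulmxDr mxE addrC. Qed.
Lemma formBl N (X : 'M[C]_N) u v w : form X (u - v) w = form X u w - form X v w.
Proof. by rewrite -scaleN1r formDl formZl rmorphN1 mulN1r. Qed.
Lemma formBr N (X : 'M[C]_N) u v w : form X u (v - w) = form X u v - form X u w.
Proof. by rewrite -scaleN1r formDr formZr mulN1r addrC. Qed.

End Aux.
From mathcomp Require Import ring.
Section Psd.
Variable C : numClosedFieldType.
Lemma conjD (x y : C) : (x + y)^* = x^* + y^*. Proof. exact: rmorphD. Qed.
Lemma conjM (x y : C) : (x * y)^* = x^* * y^*. Proof. exact: rmorphM. Qed.
Lemma conjN (x : C) : (- x)^* = - x^*. Proof. exact: rmorphN. Qed.
Lemma conjB (x y : C) : (x - y)^* = x^* - y^*. Proof. exact: rmorphB. Qed.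
Lemma conjV (x : C) : (x^-1)^* = (x^*)^-1. Proof. exact: fmorphV. Qed.

Lemma herm_alg (a b as' bs qv qw : C) :
  as' + qv + (qw + bs) = a + qv + (qw + b) ->
  - 'i * as' + qv + (- - 'i * (- 'i * qw) + - - 'i * bs) =
    'i * a + qv + (- 'i * ('i * qw) + - 'i * b) -> b = as'.
Proof.
move=> h1 h2.
have e : 2 * (as' - b) =
  (as' + qv + (qw + bs) - (a + qv + (qw + b)))
  + 'i * (- 'i * as' + qv + (- - 'i * (- 'i * qw) + - - 'i * bs) -
    ('i * a + qv + (- 'i * ('i * qw) + - 'i * b)))
  - ('i ^+ 2 + 1) * (- as' + bs - a + b) by ring.
move: e; rewrite h1 h2 !subrr sqrCi mulr0 addNr mul0r !subr0 addr0 => /eqP.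
by rewrite mulf_eq0 pnatr_eq0 /= subr_eq0 => /eqP.
Qed.

Lemma form_ge0 N (X : 'M[C]_N) v : psdmx X -> 0 <= form X v v.
Proof. by move=> h; apply: h. Qed.

Lemma form_herm N (X : 'M[C]_N) v w : psdmx X -> form X w v = (form X v w)^*.
Proof.
move=> hX.
set a := form X v w; set b := form X w v.
have cv := geC0_conj (form_ge0 v hX); have cw := geC0_conj (form_ge0 w hX).
have c1 := geC0_conj (form_ge0 (v + w) hX).
have c2 := geC0_conj (form_ge0 (v + 'i *: w) hX).
rewrite !formDl !formDr in c1.
rewrite !formDl !formDr !formZl !formZr conjCi in c2.
rewrite -/a -/b in c1 c2.
rewrite !conjD cv cw in c1.
rewrite !conjD !conjM conjN conjCi cv cw in c2.
exact: (herm_alg c1 c2).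
Qed.

Lemma psd_CS N (X : 'M[C]_N) v w : psdmx X ->
  2 * `|form X v w| <= form X v v + form X w w.
Proof.
move=> hX; set z := form X v w.
have gv := form_ge0 v hX; have gw := form_ge0 w hX.
have [z0|nz] := eqVneq z 0.
  by rewrite z0 normr0 mulr0 addr_ge0.
have nn : `|z| != 0 by rewrite normr_eq0.
set mu := z^* / `|z|.
have h1 : mu * z = `|z|.
  by rewrite /mu mulrAC [z^* * z]mulrC -normCK expr2 mulfK.
have cm : mu^* = z / `|z|.
  by rewrite /mu conjM conjV conj_normC conjCK.
have h2 : mu^* * z^* = `|z|.
  by rewrite cm mulrAC -normCK expr2 mulfK.
have h3 : mu^* * mu = 1.
  by rewrite cm /mu mulrACA -normCK -invfM -expr2 divff // expf_neq0.
have := form_ge0 (v - mu *: w) hX.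
rewrite !formBl !formBr !formZl !formZr (form_herm v w hX) -/z.
rewrite (mulrA mu^* mu) h3 mul1r h2 h1.
have -> : form X v v - `|z| - (`|z| - form X w w) = form X v v + form X w w - 2 * `|z| by ring.
by rewrite subr_ge0.
Qed.
End Psd.

Section Scal.
Variable R : numDomainType.

Lemma P3 (x a b : R) : 0 <= x -> 0 <= a -> 0 <= b ->
  (forall s t, 0 <= s -> 0 <= t -> 2 * s * t * x <= s ^+ 2 * a + t ^+ 2 * b) ->
  x ^+ 2 <= a * b.
Proof.
move=> x0 a0 b0 H.
move: a0; rewrite le0r => /orP[/eqP a0|ap].
  have := H (b + 1) x (addr_ge0 b0 ler01) x0.
  rewrite a0 mulr0 add0r -subr_ge0 mul0r.
  have -> : x ^+ 2 * b - 2 * (b + 1) * x * x = - (x ^+ 2 * b + x ^+ 2 + x ^+ 2) by ring.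
  rewrite oppr_ge0 => h.
  have hx : 0 <= x ^+ 2 by rewrite exprn_ge0.
  have : x ^+ 2 <= 0.
    apply: le_trans h; rewrite lerDr addr_ge0 // mulr_ge0 //.
  by [].
have := H x a x0 (ltW ap); rewrite -subr_ge0.
have -> : x ^+ 2 * a + a ^+ 2 * b - 2 * x * a * x = a * (a * b) - a * x ^+ 2 by ring.
by rewrite subr_ge0 ler_pM2l.
Qed.

Lemma P4 (x a b y c d : R) : 0 <= x -> 0 <= a -> 0 <= b -> 0 <= y -> 0 <= c -> 0 <= d ->
  (forall s t, 0 <= s -> 0 <= t -> 2 * s * t * x <= s ^+ 2 * a + t ^+ 2 * b) ->
  (forall s t, 0 <= s -> 0 <= t -> 2 * s * t * y <= s ^+ 2 * c + t ^+ 2 * d) ->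
  2 * x * y <= a * d + b * c.
Proof.
move=> x0 a0 b0 y0 c0 d0 Hm Hn.
have hy := P3 y0 c0 d0 Hn.
move: (c0); rewrite le0r => /orP[/eqP c00|cp].
  move: hy; rewrite c00 mul0r => hy.
  have : y ^+ 2 == 0 by rewrite eq_le hy exprn_ge0.
  rewrite expf_eq0 /= => /eqP ->.
  by rewrite mulr0 addr_ge0 // mulr_ge0.
have := Hm y c y0 (ltW cp); rewrite -subr_ge0 => h.
rewrite -(ler_pM2l cp) -subr_ge0.
have : 0 <= c * (a * d + b * c) - (y ^+ 2 * a + c ^+ 2 * b) .
  rewrite subr_ge0.
  have -> : c * (a * d + b * c) = (c * d) * a + c ^+ 2 * b by ring.
  by rewrite lerD2r ler_wpM2r // mulrC.
move=> h'.
have -> : c * (a * d + b * c) - c * (2 * x * y) =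
  (c * (a * d + b * c) - (y ^+ 2 * a + c ^+ 2 * b)) + (y ^+ 2 * a + c ^+ 2 * b - 2 * y * c * x) by ring.
exact: addr_ge0.
Qed.
End Scal.

Section PsdMx.
Variable C : numClosedFieldType.

Lemma form_delta n (M : 'M[C]_n) i j :
  form M (delta_mx i 0) (delta_mx j 0) = M i j.
Proof. by rewrite /form adjmx_delta -rowE -colE !mxE. Qed.

Lemma psd_diag n (M : 'M[C]_n) i : psdmx M -> 0 <= M i i.
Proof. by move=> h; rewrite -form_delta; apply: form_ge0. Qed.

Lemma psd_scal n (M : 'M[C]_n) i j : psdmx M ->
  forall s t, 0 <= s -> 0 <= t -> 2 * s * t * `|M i j| <= s ^+ 2 * M i i + t ^+ 2 * M j j.
Proof.
move=> h s t s0 t0.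
have := psd_CS (s *: delta_mx i 0) (t *: delta_mx j 0) h.
rewrite !formZl !formZr !form_delta !geC0_conj // !normrM (ger0_norm s0) (ger0_norm t0).
by rewrite !mulrA -!expr2.
Qed.

Lemma psd_rot n (U X : 'M[C]_n) : psdmx X -> psdmx (adjmx U *m X *m U).
Proof.
move=> h v; have := h (U *m v).
by rewrite adjmxM !mulmxA.
Qed.

Lemma psd_gram n k (z : 'M[C]_(n, k)) : psdmx (z *m adjmx z).
Proof.
move=> v; set w := adjmx z *m v.
have -> : adjmx v *m (z *m adjmx z) *m v = adjmx w *m w.
  by rewrite /w adjmxM adjmxK !mulmxA.
rewrite mxE; apply: sumr_ge0 => l _; rewrite adjmxE mulrC; exact: mul_conjC_ge0.
Qed.
End PsdMx.

Section Comb.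
Variable R : numDomainType.
Variables (I J : finType) (g : I -> J).
Hypothesis ginj : injective g.

Lemma Linj (P : pred I) (Q : pred J) (F : J -> R) :
  (forall j, 0 <= F j) -> (forall k, P k -> Q (g k)) ->
  \sum_(k | P k) F (g k) <= \sum_(j | Q j) F j.
Proof.
move=> F0 PQ.
set S := [set g k | k in P].
rewrite (bigID (fun j => j \in S)) /=.
have -> : \sum_(j | Q j && (j \in S)) F j = \sum_(j in S) F j.
  apply: eq_bigl => j; apply/andP/idP => [[]//|jS]; split=> //.
  by case/imsetP: jS => k kP ->; apply: PQ.
rewrite big_imset; last by move=> x y _ _; apply: ginj.
rewrite lerDl; apply: sumr_ge0 => j _; exact: F0.
Qed.

Lemma Lsum1 (P : pred I) (c : I -> R) :
  \sum_j `|\sum_(k | P k) c k * (j == g k)%:R| = \sum_(k | P k) `|c k|.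
Proof.
transitivity (\sum_j \sum_(k | P k) `|c k| * (j == g k)%:R).
  apply: eq_bigr => j _.
  have [k0 /andP[Pk0 /eqP e]|ne] := pickP (fun k => P k && (j == g k)).
    rewrite (bigD1 k0 Pk0) [in RHS](bigD1 k0 Pk0) /= e eqxx !mulr1.
    rewrite !big1 ?addr0 // => k /andP[_ nk].
      by rewrite (inj_eq ginj) eq_sym (negbTE nk) mulr0.
    by rewrite (inj_eq ginj) eq_sym (negbTE nk) mulr0.
  rewrite !big1 ?normr0 // => k Pk; have := ne k; rewrite Pk /= => ->; by rewrite mulr0.
rewrite exchange_big /=; apply: eq_bigr => k Pk.
rewrite (bigD1 (g k)) //= eqxx mulr1 big1 ?addr0 // => j /negbTE ->; by rewrite mulr0.
Qed.
End Comb.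

Section Quantum.
Variable C : numClosedFieldType.
Variables (dA dB : nat) (UA : 'M[C]_dA) (UB : 'M[C]_dB) (t : 'M[C]_(minn dA dB)).
Hypotheses (hUA : unitary UA) (hUB : unitary UB).

Local Notation n := (minn dA dB).
Definition Pi (i : 'I_n) : 'I_(dA * dB) := mxtens_index (idxA i, idxB i).
Definition Qi (i j : 'I_n) : 'I_(dA * dB) := mxtens_index (idxA i, idxB j).
Definition gP (k : 'I_n * 'I_n) := (Pi k.1, Pi k.2).
Definition gQ (k : 'I_n * 'I_n) := (Qi k.1 k.2, Qi k.1 k.2).
Definition W := UA *t UB.
Definition rot (X : 'M[C]_(dA * dB)) := adjmx W *m X *m W.

Lemma idx_inj m1 m2 : injective (@mxtens_index m1 m2).
Proof. exact: can_inj (@mxtens_indexK m1 m2). Qed.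

Lemma idxA_inj : injective (@idxA dA dB).
Proof. by move=> i j e; apply: val_inj; have := congr1 val e. Qed.
Lemma idxB_inj : injective (@idxB dA dB).
Proof. by move=> i j e; apply: val_inj; have := congr1 val e. Qed.

Lemma QiP i j k : Qi i j = Pi k -> i = k /\ j = k.
Proof.
move=> e; case: (idx_inj e) => e1 e2; split; apply: val_inj; [exact: e1|exact: e2].
Qed.

Lemma Pi_inj : injective Pi.
Proof. by move=> i j e; case: (QiP e). Qed.

Lemma gP_inj : injective gP.
Proof.
move=> [a b] [c d] e; have e1 := congr1 fst e; have e2 := congr1 snd e.
by rewrite /= in e1 e2; rewrite (Pi_inj e1) (Pi_inj e2).
Qed.

Lemma gQ_inj : injective gQ.
Proof.
move=> [a b] [c d] e0; have e := congr1 fst e0; case: (idx_inj e) => e1 e2.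
by congr (_, _); apply: val_inj; [exact: e1|exact: e2].
Qed.

Lemma col_mulmx m k p (A : 'M[C]_(m,k)) (B : 'M[C]_(k,p)) j :
  col j (A *m B) = A *m col j B.
Proof. by rewrite !colE mulmxA. Qed.

Lemma rot1 d (U : 'M[C]_d) x y : unitary U ->
  adjmx U *m ketbra (col x U) (col y U) *m U = delta_mx x y.
Proof.
move=> hU; rewrite /ketbra.
have -> : adjmx U *m (col x U *m adjmx (col y U)) *m U =
  (adjmx U *m col x U) *m adjmx (adjmx U *m col y U).
  by rewrite adjmxM adjmxK !mulmxA.
by rewrite -!col_mulmx unitaryV // !colE !mul1mx adjmx_delta mul_delta_mx.
Qed.

Lemma delta_tens m1 m2 n1 n2 (a : 'I_m1) (b : 'I_n1) (c : 'I_m2) (d : 'I_n2) :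
  (delta_mx a b : 'M[C]_(m1, n1)) *t (delta_mx c d : 'M[C]_(m2, n2)) =
  delta_mx (mxtens_index (a, c)) (mxtens_index (b, d)).
Proof.
apply/matrixP=> i j.
case: (mxtens_indexP i) => i1 i2; case: (mxtens_indexP j) => j1 j2.
rewrite tensmxE !mxE !(inj_eq (@idx_inj _ _)) !xpair_eqE -natrM mulnb.
by rewrite andbACA.
Qed.

Lemma rot_tens (A : 'M[C]_dA) (B : 'M[C]_dB) :
  rot (A *t B) = (adjmx UA *m A *m UA) *t (adjmx UB *m B *m UB).
Proof. by rewrite /rot /W adjmxT !tensmx_mul. Qed.

Lemma rot_lin (F : 'I_n -> 'I_n -> C) G :
  rot (\sum_i \sum_j F i j *: G i j) = \sum_i \sum_j F i j *: rot (G i j).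
Proof.
rewrite /rot mulmx_sumr mulmx_suml; apply: eq_bigr => i _.
rewrite mulmx_sumr mulmx_suml; apply: eq_bigr => j _.
by rewrite -scalemxAr -scalemxAl.
Qed.

Lemma rot_tau : rot (maxcorr UA UB t) =
  \sum_i \sum_j t i j *: delta_mx (Pi i) (Pi j).
Proof.
rewrite /maxcorr rot_lin; apply: eq_bigr => i _; apply: eq_bigr => j _.
by rewrite rot_tens !rot1 // delta_tens.
Qed.

Lemma rot_sigma : rot (maxcorr_diag UA UB t) =
  \sum_i t i i *: delta_mx (Pi i) (Pi i).
Proof.
rewrite /maxcorr_diag /rot mulmx_sumr mulmx_suml; apply: eq_bigr => i _.
by rewrite -scalemxAr -scalemxAl -/(rot _) rot_tens !rot1 // delta_tens.
Qed.

Lemma mxBE m1 m2 (A B : 'M[C]_(m1, m2)) i j : (A - B) i j = A i j - B i j.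
Proof. by rewrite !mxE. Qed.

Lemma rotB X Y : rot (X - Y) = rot X - rot Y.
Proof. by rewrite /rot mulmxBr mulmxBl. Qed.

Lemma rot_tau_entry p q : rot (maxcorr UA UB t) p q =
  \sum_(k : 'I_n * 'I_n) t k.1 k.2 * ((p, q) == gP k)%:R.
Proof.
rewrite rot_tau summxE; under eq_bigr do rewrite summxE.
rewrite pair_bigA /=; apply: eq_bigr => k _.
by rewrite !mxE xpair_eqE.
Qed.

Lemma rot_diff_entry p q :
  (rot (maxcorr UA UB t) - rot (maxcorr_diag UA UB t)) p q =
  \sum_(k | k.1 != k.2) t k.1 k.2 * ((p, q) == gP k)%:R.
Proof.
rewrite rot_tau rot_sigma -sumrB.
have -> : \sum_i (\sum_j t i j *: delta_mx (Pi i) (Pi j) - t i i *: delta_mx (Pi i) (Pi i))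
  = \sum_i \sum_(j | i != j) t i j *: delta_mx (Pi i) (Pi j).
  apply: eq_bigr => i _; rewrite (bigD1 i) //= addrAC subrr add0r.
  by apply: eq_bigl => j; rewrite eq_sym.
rewrite summxE; under eq_bigr do rewrite summxE.
rewrite pair_big_dep /=; apply: eq_bigr => k _.
by rewrite !mxE xpair_eqE.
Qed.

Lemma l1_sigma : l1norm_in W (maxcorr UA UB t - maxcorr_diag UA UB t) =
  \sum_(k | k.1 != k.2) `|t k.1 k.2|.
Proof.
rewrite /l1norm_in -/W.
under eq_bigr do under eq_bigr do rewrite -/(rot _) rotB rot_diff_entry.
rewrite pair_bigA /=.
under eq_bigr do rewrite -surjective_pairing.
exact: (Lsum1 gP_inj (fun k : 'I_n * 'I_n => k.1 != k.2) (fun k => t k.1 k.2)).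
Qed.

Definition Good (X : 'M[C]_(dA * dB)) := forall i j : 'I_n, i != j ->
  0 <= X (Qi i j) (Qi i j) /\
  2 * `|X (Pi i) (Pi j)| <= X (Qi i j) (Qi i j) + X (Qi j i) (Qi j i).

Lemma rot_tau_Q i j : i != j -> rot (maxcorr UA UB t) (Qi i j) (Qi i j) = 0.
Proof.
move=> ij; rewrite rot_tau_entry big1 // => k _.
case: eqP => [e|]; last by rewrite mulr0.
have e1 := congr1 fst e; have e2 := congr1 snd e; rewrite /= in e1 e2.
case: (QiP e1) => a b; case: (QiP e2) => c d.
by move: ij; rewrite a b eqxx.
Qed.

Lemma rot_tau_P i j : rot (maxcorr UA UB t) (Pi i) (Pi j) = t i j.
Proof.
rewrite rot_tau_entry (bigD1 (i, j)) //= big1 ?addr0.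
  by rewrite -[(Pi i, Pi j)]/(gP (i, j)) eqxx mulr1.
move=> k nk; rewrite -[(Pi i, Pi j)]/(gP (i, j)) (inj_eq gP_inj) eq_sym.
by rewrite (negbTE nk) mulr0.
Qed.

Lemma swap_inj : injective (fun k : 'I_n * 'I_n => (k.2, k.1)).
Proof. by move=> [a b] [c d] /= e; have e1 := congr1 fst e; have e2 := congr1 snd e; rewrite /= in e1 e2; rewrite e1 e2. Qed.

Lemma lower xi : Good (rot xi) ->
  l1norm_in W (maxcorr UA UB t - maxcorr_diag UA UB t) <=
  l1norm_in W (maxcorr UA UB t - xi).
Proof.
move=> hG.
rewrite l1_sigma /l1norm_in -/W.
under [X in _ <= X]eq_bigr do under eq_bigr do rewrite -/(rot _) rotB mxBE.
rewrite pair_bigA /=.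
set F := fun pq : 'I_(dA * dB) * 'I_(dA * dB) =>
  `|rot (maxcorr UA UB t) pq.1 pq.2 - rot xi pq.1 pq.2|.
rewrite -/(\sum_pq F pq) [X in _ <= X](bigID (fun pq => pq.1 == pq.2)) /=.
have F0 : forall pq, 0 <= F pq by move=> pq; exact: normr_ge0.
have h1 := @Linj _ _ _ _ gQ_inj (fun k : 'I_n * 'I_n => k.1 != k.2) (fun pq => pq.1 == pq.2) F F0
  (fun k _ => eqxx _).
have PQ2 : forall k : 'I_n * 'I_n, k.1 != k.2 -> (gP k).1 != (gP k).2.
  by move=> k hk; rewrite /= (inj_eq Pi_inj).
have h2 := @Linj _ _ _ _ gP_inj (fun k : 'I_n * 'I_n => k.1 != k.2) (fun pq => pq.1 != pq.2) F F0 PQ2.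
pose y : 'I_n * 'I_n -> C := fun k => rot xi (Qi k.1 k.2) (Qi k.1 k.2).
pose x : 'I_n * 'I_n -> C := fun k => rot xi (Pi k.1) (Pi k.2).
have eQ : \sum_(k | k.1 != k.2) F (gQ k) = \sum_(k | k.1 != k.2) y k.
  apply: eq_bigr => k hk; rewrite /F /= rot_tau_Q // sub0r normrN.
  by rewrite ger0_norm //; case: (hG _ _ hk).
have eP : \sum_(k | k.1 != k.2) F (gP k) = \sum_(k | k.1 != k.2) `|t k.1 k.2 - x k|.
  by apply: eq_bigr => k hk; rewrite /F /= rot_tau_P.
rewrite eQ in h1; rewrite eP in h2.
have hx : \sum_(k | k.1 != k.2) `|x k| <= \sum_(k | k.1 != k.2) y k.
  rewrite -(@ler_pM2l _ 2) ?ltr0n // !mulr_sumr.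
  apply: (@le_trans _ _ (\sum_(k | k.1 != k.2) (y k + y (k.2, k.1)))).
    by apply: ler_sum => k hk; case: (hG _ _ hk).
  rewrite big_split /= [X in _ + X <= _](reindex_inj swap_inj) /=.
  rewrite [X in _ + X <= _](eq_bigl (fun k : 'I_n * 'I_n => k.1 != k.2)); last first.
    by move=> k; rewrite eq_sym.
  rewrite -big_split /=; apply: ler_sum => k _.
  by rewrite -surjective_pairing mulr_natl mulr2n.
apply: (@le_trans _ _ (\sum_(k | k.1 != k.2) `|t k.1 k.2 - x k| + \sum_(k | k.1 != k.2) `|x k|)).
  rewrite -big_split /=; apply: ler_sum => k _.
  by have := ler_normD (t k.1 k.2 - x k) (x k); rewrite subrK.
rewrite addrC; apply: lerD; first exact: h2.
exact: le_trans hx h1.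
Qed.

Lemma formE N (X : 'M[C]_N) v w :
  form X v w = \sum_r \sum_s (v r 0)^* * X r s * w s 0.
Proof.
rewrite /form mxE; under eq_bigr do rewrite mxE big_distrl /=.
rewrite exchange_big /=; apply: eq_bigr => r _; apply: eq_bigr => s _.
by rewrite adjmxE.
Qed.

Lemma sum_tens m1 m2 (F : 'I_(m1 * m2) -> C) :
  \sum_r F r = \sum_a \sum_b F (mxtens_index (a, b)).
Proof.
rewrite pair_bigA /=.
rewrite (reindex (@mxtens_index m1 m2)) /=; last first.
  by exists (@mxtens_unindex m1 m2) => x _; rewrite (mxtens_indexK, mxtens_unindexK).
by apply: eq_bigr => -[a b] _.
Qed.

Definition vv (x : 'I_dA) (y : 'I_dB) : 'cV[C]_(dA * dB) :=
  \col_r (UA (mxtens_unindex r).1 x * (UB (mxtens_unindex r).2 y)^*).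

Lemma rot_ptrans xi a1 b1 c1 d1 :
  rot xi (mxtens_index (a1, b1)) (mxtens_index (c1, d1)) =
  form (ptransB xi) (vv a1 d1) (vv c1 b1).
Proof.
rewrite /rot rot_entry !formE !sum_tens.
under eq_bigr do under eq_bigr do rewrite sum_tens.
under [RHS]eq_bigr do under eq_bigr do rewrite sum_tens.
apply: eq_bigr => a _.
under [RHS]eq_bigr do rewrite exchange_big /=.
rewrite [RHS]exchange_big /=.
under [RHS]eq_bigr do rewrite exchange_big /=.
apply: eq_bigr => b _; apply: eq_bigr => c _; apply: eq_bigr => d _.
rewrite !mxE !mxtens_indexK /= /W.
rewrite !conjM !conjCK; ring.
Qed.

Lemma good_PPT xi : psdmx (ptransB xi) -> Good (rot xi).
Proof.
move=> hY i j _; rewrite /Pi /Qi !rot_ptrans; split; first exact: form_ge0.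
exact: psd_CS.
Qed.

Lemma good_SEP xi : SEP xi -> Good (rot xi).
Proof.
move=> [K [p [rA [rB [p0 _ hA hB ->]]]]].
pose A k := adjmx UA *m rA k *m UA.
pose B k := adjmx UB *m rB k *m UB.
have pA : forall k, psdmx (A k) by move=> k; apply: psd_rot; case: (hA k).
have pB : forall k, psdmx (B k) by move=> k; apply: psd_rot; case: (hB k).
have E : forall a b c d, rot (\sum_(k < K) p k *: (rA k *t rB k))
   (mxtens_index (a, b)) (mxtens_index (c, d)) = \sum_k p k * (A k a c * B k b d).
  move=> a b c d; rewrite /rot mulmx_sumr mulmx_suml summxE; apply: eq_bigr => k _.
  by rewrite -scalemxAr -scalemxAl -/(rot _) rot_tens mxE tensmxE.
move=> i j _; rewrite /Pi /Qi !E; split.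
  apply: sumr_ge0 => k _; apply: mulr_ge0 => //; apply: mulr_ge0; exact: psd_diag.
rewrite -big_split /=.
apply: (le_trans (ler_wpM2l _ (ler_norm_sum _ _ _))) => //.
rewrite mulr_sumr; apply: ler_sum => k _.
rewrite normrM (ger0_norm (p0 k)) mulrCA -mulrDr; apply: ler_wpM2l => //.
rewrite normrM mulrA.
apply: P4; rewrite ?normr_ge0 ?psd_diag //; exact: psd_scal.
Qed.

Lemma tr_delta m (p q : 'I_m) : \tr (delta_mx p q : 'M[C]_m) = (p == q)%:R.
Proof.
rewrite /mxtrace (bigD1 p) //= big1 ?addr0.
  by rewrite mxE eqxx.
by move=> k nk; rewrite mxE (negbTE nk).
Qed.

Lemma mxtrace_sum m K (F : 'I_K -> 'M[C]_m) : \tr (\sum_i F i) = \sum_i \tr (F i).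
Proof. exact: raddf_sum. Qed.

Lemma tens11 m k : (1%:M : 'M[C]_m) *t (1%:M : 'M[C]_k) = 1%:M.
Proof.
apply/matrixP=> i j.
case: (mxtens_indexP i) => i1 i2; case: (mxtens_indexP j) => j1 j2.
by rewrite tensmxE !mxE (inj_eq (@idx_inj _ _)) xpair_eqE -natrM mulnb.
Qed.

Lemma trace_rot X : \tr (rot X) = \tr X.
Proof.
rewrite /rot mxtrace_mulC mulmxA.
have -> : W *m adjmx W = 1%:M by rewrite /W adjmxT tensmx_mul hUA hUB tens11.
by rewrite mul1mx.
Qed.

Lemma tr_rot_sigma : \tr (rot (maxcorr_diag UA UB t)) = \sum_i t i i.
Proof.
rewrite rot_sigma mxtrace_sum; apply: eq_bigr => i _.
by rewrite mxtraceZ tr_delta eqxx mulr1.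
Qed.

Lemma tr_rot_tau : \tr (rot (maxcorr UA UB t)) = \sum_i t i i.
Proof.
rewrite rot_tau mxtrace_sum; apply: eq_bigr => i _.
rewrite mxtrace_sum (bigD1 i) //= big1 ?addr0.
  by rewrite mxtraceZ tr_delta eqxx mulr1.
by move=> j nj; rewrite mxtraceZ tr_delta (inj_eq Pi_inj) eq_sym (negbTE nj) mulr0.
Qed.

Lemma t_ge0 i : psdmx (maxcorr UA UB t) -> 0 <= t i i.
Proof. by move=> h; rewrite -rot_tau_P /rot rot_entry; apply: form_ge0. Qed.

End Quantum.

Section Psd2.
Variable C : numClosedFieldType.

Lemma form_sumZ N K (c : 'I_K -> C) (M : 'I_K -> 'M[C]_N) v w :
  form (\sum_i c i *: M i) v w = \sum_i c i * form (M i) v w.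
Proof.
rewrite /form mulmx_sumr mulmx_suml summxE; apply: eq_bigr => i _.
by rewrite -scalemxAr -scalemxAl mxE.
Qed.

Lemma psd_sum N K (c : 'I_K -> C) (M : 'I_K -> 'M[C]_N) :
  (forall i, 0 <= c i) -> (forall i, psdmx (M i)) -> psdmx (\sum_i c i *: M i).
Proof.
move=> c0 hM v; change (0 <= form (\sum_i c i *: M i) v v); rewrite form_sumZ; apply: sumr_ge0 => i _.
apply: mulr_ge0 => //; exact: hM.
Qed.

Lemma ket_density d (U : 'M[C]_d) x : unitary U -> density (ketbra (col x U) (col x U)).
Proof.
move=> hU; split; first exact: psd_gram.
rewrite /ketbra mxtrace_mulC trace_mx11.
have := congr1 (fun M : 'M[C]_d => M x x) (unitaryV hU); rewrite /= !mxE eqxx /= mulr1n => <-.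
by apply: eq_bigr => r _; rewrite !mxE.
Qed.

Lemma psd_tens_ket m k (u : 'cV[C]_m) (w : 'cV[C]_k) : psdmx (ketbra u u *t ketbra w w).
Proof. by rewrite /ketbra -tensmx_mul -adjmxT; exact: psd_gram. Qed.

Lemma ptransB_sumZ dA dB K (c : 'I_K -> C) (M : 'I_K -> 'M[C]_(dA * dB)) :
  ptransB (\sum_i c i *: M i) = \sum_i c i *: ptransB (M i).
Proof.
apply/matrixP=> p q; rewrite mxE !summxE; apply: eq_bigr => i _.
by rewrite !mxE.
Qed.

Lemma ptransB_tens dA dB (A : 'M[C]_dA) (B : 'M[C]_dB) : ptransB (A *t B) = A *t B^T.
Proof.
apply/matrixP=> p q.
case: (mxtens_indexP p) => p1 p2; case: (mxtens_indexP q) => q1 q2.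
by rewrite mxE !mxtens_indexK /= !tensmxE mxE.
Qed.

Lemma trans_ket m (w : 'cV[C]_m) :
  (ketbra w w)^T = ketbra (map_mx Num.conj w) (map_mx Num.conj w).
Proof.
apply/matrixP=> i j; rewrite !mxE; apply: eq_bigr => k _.
by rewrite !mxE conjCK mulrC.
Qed.

End Psd2.

Unset Implicit Arguments.
Set Strict Implicit.
Theorem theorem6 (C : numClosedFieldType) (dA dB : nat)
    (UA : 'M[C]_dA) (UB : 'M[C]_dB) (t : 'M[C]_(minn dA dB)) :
  unitary UA -> unitary UB ->
  density (maxcorr UA UB t) ->
  let tau := maxcorr UA UB t in
  let sigma := maxcorr_diag UA UB t in
  let l1 := l1norm_in (UA *t UB) in
  [/\ PPT sigma, SEP sigma,
      forall xi : 'M[C]_(dA * dB), PPT xi -> l1 (tau - sigma) <= l1 (tau - xi) &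
      forall xi : 'M[C]_(dA * dB), SEP xi -> l1 (tau - sigma) <= l1 (tau - xi)].
Proof.
move=> hUA hUB [hpsd htr] tau sigma l1.
have t0 : forall i, 0 <= t i i by move=> i; exact: (t_ge0 hUA hUB).
have ts : \sum_i t i i = 1 by rewrite -(tr_rot_tau t hUA hUB) (trace_rot hUA hUB).
have sdens : density sigma.
  split.
    apply: psd_sum => // i; exact: psd_tens_ket.
  by rewrite -(trace_rot hUA hUB) (@tr_rot_sigma _ _ _ _ _ t hUA hUB).
split.
- split => //.
  rewrite /sigma /maxcorr_diag ptransB_sumZ; apply: psd_sum => // i.
  rewrite ptransB_tens trans_ket; exact: psd_tens_ket.
- exists (minn dA dB), (fun i => t i i),
    (fun i => ketbra (col (idxA i) UA) (col (idxA i) UA)),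
    (fun i => ketbra (col (idxB i) UB) (col (idxB i) UB)).
  split => // i; exact: ket_density.
- move=> xi [_ hxi]; exact: (lower t hUA hUB (good_PPT UA UB hxi)).
- move=> xi hxi; exact: (lower t hUA hUB (good_SEP UA UB hxi)).
Qed.
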